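(* Let $(X,G)$ be a minimal system with finite minimal rank $mr$. Then $cr=\#\pi_{max}^{-1}(x)$ for every fiber distal point $x\in X_{max}$. Moreover, $X_{max}^{distal}=\{x\in X_{max}:\#\pi_{max}^{-1}(x)=cr\}$, and $cr=mr$ whenever $X_{max}$ contains a fiber distal point.
   Context: Let $X$ be a compact metric space with metric $d$ and $G$ a locally compact abelian group acting continuously and minimally on $X$, written $t\cdot x$. Points $x,y$ are proximal if $\inf_{t\in G}d(t\cdot x,t\cdot y)=0$. Let $\pi_{max}:X\to X_{max}$ be the maximal equicontinuous factor. For $x\in X_{max}$, $\delta>0$, $cr(x,\delta)$ is the maximal cardinality $l$ of a set $\{x_1,\dots,x_l\}\subset\pi_{max}^{-1}(x)$ with $\inf_{t\in G}d(t\cdot x_i,t\cdot x_j)\ge\delta$ for $i\neq j$; the coincidence rank is $cr=\lim_{\delta\to0^+}cr(x,\delta)$ (independent of $x$). The minimal rank is $mr=\inf\{\#\pi_{max}^{-1}(x):x\in X_{max}\}$. A point $x\in X$ is distal if it is not proximal to any $y\neq x$; a point $x\in X_{max}$ is fiber distal if every point of $\pi_{max}^{-1}(x)$ is distal; $X_{max}^{distal}$ denotes the set of fiber distal points. *)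

(* Defs.v *)
From Stdlib Require Import Reals List.
Open Scope R_scope.
Set Implicit Arguments.

Definition is_metric {X : Type} (d : X -> X -> R) : Prop :=
  (forall x y, 0 <= d x y) /\
  (forall x y, d x y = 0 <-> x = y) /\
  (forall x y, d x y = d y x) /\
  (forall x y z, d x z <= d x y + d y z).

Definition metric_open {X : Type} (d : X -> X -> R) (U : X -> Prop) : Prop :=
  forall x, U x -> exists e, 0 < e /\ forall y, d x y < e -> U y.

Definition metric_closed {X : Type} (d : X -> X -> R) (A : X -> Prop) : Prop :=
  metric_open d (fun x => ~ A x).

Definition compact_metric_space {X : Type} (d : X -> X -> R) : Prop :=
  is_metric d /\
  forall (I : Type) (U : I -> X -> Prop),
    (forall i, metric_open d (U i)) ->
    (forall x, exists i, U i x) ->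
    exists l : list I, forall x, exists i, In i l /\ U i x.

Definition metric_continuous {X Y : Type} (dX : X -> X -> R) (dY : Y -> Y -> R)
  (f : X -> Y) : Prop :=
  forall x eps, 0 < eps -> exists delta, 0 < delta /\
    forall x', dX x x' < delta -> dY (f x) (f x') < eps.

Definition is_topology {G : Type} (opn : (G -> Prop) -> Prop) : Prop :=
  opn (fun _ => True) /\ opn (fun _ => False) /\
  (forall U V, opn U -> opn V -> opn (fun x => U x /\ V x)) /\
  (forall (I : Type) (F : I -> G -> Prop),
      (forall i, opn (F i)) -> opn (fun x => exists i, F i x)).

Definition is_hausdorff {G : Type} (opn : (G -> Prop) -> Prop) : Prop :=
  forall x y, x <> y -> exists U V, opn U /\ opn V /\ U x /\ V y /\
    forall z, U z -> V z -> False.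

Definition top_compact_subset {G : Type} (opn : (G -> Prop) -> Prop) (K : G -> Prop) : Prop :=
  forall (I : Type) (F : I -> G -> Prop),
    (forall i, opn (F i)) ->
    (forall x, K x -> exists i, F i x) ->
    exists l : list I, forall x, K x -> exists i, In i l /\ F i x.

Definition locally_compact {G : Type} (opn : (G -> Prop) -> Prop) : Prop :=
  forall g, exists (U K : G -> Prop), opn U /\ U g /\ (forall x, U x -> K x) /\
    top_compact_subset opn K.

Definition is_abelian_group {G : Type} (op : G -> G -> G) (e : G) (inv : G -> G) : Prop :=
  (forall a b c, op a (op b c) = op (op a b) c) /\
  (forall a b, op a b = op b a) /\
  (forall a, op e a = a) /\
  (forall a, op (inv a) a = e).

Definition is_LCA_group {G : Type} (op : G -> G -> G) (e : G) (inv : G -> G)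
  (opn : (G -> Prop) -> Prop) : Prop :=
  is_abelian_group op e inv /\ is_topology opn /\ is_hausdorff opn /\
  locally_compact opn /\
  (forall g h W, opn W -> W (op g h) ->
     exists U V, opn U /\ opn V /\ U g /\ V h /\
       forall g' h', U g' -> V h' -> W (op g' h')) /\
  (forall g W, opn W -> W (inv g) ->
     exists U, opn U /\ U g /\ forall g', U g' -> W (inv g')).

Definition is_continuous_action {G X : Type} (op : G -> G -> G) (e : G)
  (opn : (G -> Prop) -> Prop) (d : X -> X -> R) (act : G -> X -> X) : Prop :=
  (forall x, act e x = x) /\
  (forall g h x, act (op g h) x = act g (act h x)) /\
  (forall g x eps, 0 < eps -> exists (U : G -> Prop) delta,
      opn U /\ U g /\ 0 < delta /\
      forall g' x', U g' -> d x x' < delta -> d (act g x) (act g' x') < eps).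

Definition invariant_set {G X : Type} (act : G -> X -> X) (A : X -> Prop) : Prop :=
  forall t x, A x -> A (act t x).

Definition minimal_action {G X : Type} (d : X -> X -> R) (act : G -> X -> X) : Prop :=
  forall A : X -> Prop, metric_closed d A -> invariant_set act A ->
    (exists x, A x) -> forall x, A x.

Definition is_factor {G X Y : Type} (op : G -> G -> G) (e : G) (opn : (G -> Prop) -> Prop)
  (d : X -> X -> R) (act : G -> X -> X)
  (dY : Y -> Y -> R) (actY : G -> Y -> Y) (pi : X -> Y) : Prop :=
  compact_metric_space dY /\ is_continuous_action op e opn dY actY /\
  metric_continuous d dY pi /\ (forall y, exists x, pi x = y) /\
  (forall t x, pi (act t x) = actY t (pi x)).

Definition equicontinuous {G Y : Type} (dY : Y -> Y -> R) (actY : G -> Y -> Y) : Prop :=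
  forall eps, 0 < eps -> exists delta, 0 < delta /\
    forall y y', dY y y' < delta -> forall t, dY (actY t y) (actY t y') < eps.

Definition is_max_equicontinuous_factor {G X Y : Type} (op : G -> G -> G) (e : G)
  (opn : (G -> Prop) -> Prop) (d : X -> X -> R) (act : G -> X -> X)
  (dY : Y -> Y -> R) (actY : G -> Y -> Y) (pi : X -> Y) : Prop :=
  is_factor op e opn d act dY actY pi /\ equicontinuous dY actY /\
  forall (Z : Type) (dZ : Z -> Z -> R) (actZ : G -> Z -> Z) (psi : X -> Z),
    is_factor op e opn d act dZ actZ psi -> equicontinuous dZ actZ ->
    exists phi : Y -> Z, metric_continuous dY dZ phi /\ forall x, psi x = phi (pi x).

Definition proximal {G X : Type} (d : X -> X -> R) (act : G -> X -> X) (x y : X) : Prop :=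
  forall eps, 0 < eps -> exists t, d (act t x) (act t y) < eps.

Definition distal_point {G X : Type} (d : X -> X -> R) (act : G -> X -> X) (x : X) : Prop :=
  forall y, proximal d act x y -> y = x.

Definition fiber_distal {G X Y : Type} (d : X -> X -> R) (act : G -> X -> X)
  (pi : X -> Y) (y : Y) : Prop :=
  forall x, pi x = y -> distal_point d act x.

Definition fiber_card {X Y : Type} (pi : X -> Y) (y : Y) (n : nat) : Prop :=
  exists l : list X, NoDup l /\ length l = n /\ forall x, pi x = y <-> In x l.

Definition sep_fiber_set {G X Y : Type} (d : X -> X -> R) (act : G -> X -> X)
  (pi : X -> Y) (y : Y) (delta : R) (l : list X) : Prop :=
  NoDup l /\ (forall x, In x l -> pi x = y) /\
  forall a b, In a l -> In b l -> a <> b -> forall t, delta <= d (act t a) (act t b).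

Definition cr_at {G X Y : Type} (d : X -> X -> R) (act : G -> X -> X)
  (pi : X -> Y) (y : Y) (delta : R) (n : nat) : Prop :=
  (exists l, sep_fiber_set d act pi y delta l /\ length l = n) /\
  forall l, sep_fiber_set d act pi y delta l -> (length l <= n)%nat.

(* lim_{delta -> 0+} cr(y, delta) = n  (integer-valued, so eventually equal) *)
Definition cr_limit {G X Y : Type} (d : X -> X -> R) (act : G -> X -> X)
  (pi : X -> Y) (y : Y) (n : nat) : Prop :=
  exists delta0, 0 < delta0 /\ forall delta, 0 < delta -> delta < delta0 ->
    cr_at d act pi y delta n.

(* mr = n : infimum of fiber cardinalities (infinite fibers are >= every n) *)
Definition min_rank {X Y : Type} (pi : X -> Y) (n : nat) : Prop :=
  (exists y, fiber_card pi y n) /\ forall y m, fiber_card pi y m -> (n <= m)%nat.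

Definition finite_min_rank {X Y : Type} (pi : X -> Y) : Prop :=
  exists y n, fiber_card pi y n.

(* Main.v *)
Require Import Defs.
From Stdlib Require Import Reals List Lra Lia Classical ClassicalEpsilon.
Open Scope R_scope.

Lemma small_inv (eps : R) : 0 < eps -> exists N, forall n, (N <= n)%nat -> / INR (S n) < eps.
Proof.
  intros He. destruct (INR_archimed eps 1 He) as [N HN]. exists N. intros n Hn.
  assert (H0 : 0 < INR (S n)) by (apply lt_0_INR; lia).
  assert (H1 : INR N <= INR n) by (apply le_INR; lia).
  rewrite S_INR in *. set (a := INR n + 1) in *.
  apply (Rmult_lt_reg_l a); [lra|]. rewrite Rinv_r; [| lra]. unfold a. nra.
Qed.

Lemma eq_small {Y : Type} (dY : Y -> Y -> R) : is_metric dY ->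
  forall p q, (forall eps, 0 < eps -> dY p q < eps) -> p = q.
Proof.
  intros [Hpos [Hz _]] p q H. apply Hz. destruct (Req_dec (dY p q) 0) as [E|E]; auto.
  specialize (Hpos p q). specialize (H (dY p q)). lra.
Qed.

Lemma list_bound {A : Type} (f : A -> nat) (l : list A) :
  exists M, forall i, In i l -> (f i <= M)%nat.
Proof.
  induction l as [|h l [M HM]]. exists 0%nat. intros i [].
  exists (Nat.max (f h) M). intros i [<-|Hi]. lia. specialize (HM i Hi). lia.
Qed.

Lemma list_min_pos {A : Type} (Q : A -> R -> Prop) (l : list A) :
  (forall b e e', Q b e -> e' <= e -> Q b e') ->
  (forall b, In b l -> exists e, 0 < e /\ Q b e) ->
  exists e, 0 < e /\ forall b, In b l -> Q b e.
Proof.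
  intros Hmon. induction l as [|h l IH]; intros H.
  - exists 1. split. lra. intros b [].
  - destruct IH as [e1 [He1 H1]]. intros b Hb. apply H. right; auto.
    destruct (H h (or_introl eq_refl)) as [e2 [He2 H2]].
    exists (Rmin e1 e2). split. apply Rmin_pos; auto.
    intros b [<-|Hb]. apply (Hmon _ e2); auto. apply Rmin_r.
    apply (Hmon _ e1); auto. apply Rmin_l.
Qed.

Lemma bounded_max (P : nat -> Prop) (m : nat) : P 0%nat ->
  (forall k, P k -> (k <= m)%nat) -> exists c, P c /\ forall k, P k -> (k <= c)%nat.
Proof.
  intros H0. induction m as [|m IH]; intros Hb.
  - exists 0%nat. split; auto.
  - destruct (classic (P (S m))) as [Hp|Hp]. exists (S m); auto.
    apply IH. intros k Hk. specialize (Hb k Hk). destruct (Nat.eq_dec k (S m)).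
    subst; contradiction. lia.
Qed.

Definition conv {X : Type} (d : X -> X -> R) (v : nat -> X) (z : X) : Prop :=
  forall eps, 0 < eps -> exists N, forall n, (N <= n)%nat -> d z (v n) < eps.

Definition tends_inf (phi : nat -> nat) : Prop :=
  forall N, exists M, forall n, (M <= n)%nat -> (N <= phi n)%nat.

Lemma conv_sub {X : Type} (d : X -> X -> R) v z phi :
  conv d v z -> tends_inf phi -> conv d (fun n => v (phi n)) z.
Proof.
  intros Hc Ht eps He. destruct (Hc eps He) as [N HN]. destruct (Ht N) as [M HM].
  exists M. intros n Hn. apply HN. apply HM. auto.
Qed.

Lemma tends_comp phi psi : tends_inf phi -> tends_inf psi -> tends_inf (fun n => phi (psi n)).
Proof.
  intros H1 H2 N. destruct (H1 N) as [M1 HM1]. destruct (H2 M1) as [M2 HM2].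
  exists M2. intros n Hn. apply HM1. apply HM2. auto.
Qed.

Lemma ball_open {X : Type} (d : X -> X -> R) z r : is_metric d ->
  metric_open d (fun w => d z w < r).
Proof.
  intros [Hpos [Hz [Hs Ht]]] w Hw. exists (r - d z w). split. lra.
  intros y Hy. specialize (Ht z w y). lra.
Qed.

Lemma cluster {X : Type} (d : X -> X -> R) : compact_metric_space d ->
  forall u : nat -> X, exists z, forall r, 0 < r -> forall N, exists n, (N <= n)%nat /\ d z (u n) < r.
Proof.
  intros [Hm Hc] u. apply NNPP. intro Hno.
  assert (Hall : forall z, exists r N, 0 < r /\ forall n, (N <= n)%nat -> r <= d z (u n)).
  { intro z. apply NNPP; intro H1. apply Hno. exists z. intros r Hr N.
    apply NNPP; intro H2. apply H1. exists r, N. split; auto. intros n Hn.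
    apply Rnot_lt_le. intro H3. apply H2. exists n; auto. }
  set (I := {q : X * R * nat | 0 < snd (fst q) /\ forall n, (snd q <= n)%nat -> snd (fst q) <= d (fst (fst q)) (u n)}).
  destruct (Hc I (fun i w => d (fst (fst (proj1_sig i))) w < snd (fst (proj1_sig i)))) as [l Hl].
  - intro i. apply ball_open; auto.
  - intro x. destruct (Hall x) as [r [N [Hr HN]]].
    exists (exist _ (x, r, N) (conj Hr HN)). simpl.
    destruct Hm as [_ [Hz _]]. rewrite (proj2 (Hz x x) eq_refl). auto.
  - destruct (list_bound (fun i : I => snd (proj1_sig i)) l) as [M HM].
    destruct (Hl (u M)) as [i [Hi Hu]]. specialize (HM i Hi).
    destruct (proj2_sig i) as [Hr HN]. specialize (HN M HM). lra.
Qed.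

Lemma seqc {X : Type} (d : X -> X -> R) : compact_metric_space d ->
  forall u : nat -> X, exists phi z, tends_inf phi /\ conv d (fun n => u (phi n)) z.
Proof.
  intros Hc u. destruct (cluster d Hc u) as [z Hz].
  assert (H : forall k, exists n, (k <= n)%nat /\ d z (u n) < / INR (S k)).
  { intro k. apply Hz. apply Rinv_0_lt_compat, lt_0_INR. lia. }
  exists (fun k => proj1_sig (constructive_indefinite_description _ (H k))), z. split.
  - intros N. exists N. intros n Hn. pose proof (proj2_sig (constructive_indefinite_description _ (H n))) as [Hm _].
    simpl in *. lia.
  - intros eps He. destruct (small_inv eps He) as [N HN]. exists N. intros n Hn.
    pose proof (proj2_sig (constructive_indefinite_description _ (H n))) as [_ Hm]. simpl in *.
    specialize (HN n Hn). lra.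
Qed.

Lemma multi {X : Type} (d : X -> X -> R) : compact_metric_space d ->
  forall (U : X -> nat -> X) (l : list X), exists phi, tends_inf phi /\
    forall a, In a l -> exists z, conv d (fun n => U a (phi n)) z.
Proof.
  intros Hc U l. induction l as [|h l [phi [Ht IH]]].
  - exists (fun n => n). split. intros N; exists N; auto. intros a [].
  - destruct (seqc d Hc (fun n => U h (phi n))) as [psi [z [Hpsi Hz]]].
    exists (fun n => phi (psi n)). split. apply tends_comp; auto.
    intros a [<-|Ha]. exists z; auto.
    destruct (IH a Ha) as [za Hza]. exists za. apply (conv_sub d (fun n => U a (phi n))); auto.
Qed.

Lemma act_cont {G X : Type} (op : G -> G -> G) e opn (d : X -> X -> R) act :
  is_continuous_action op e opn d act ->
  forall s z eps, 0 < eps -> exists delta, 0 < delta /\ forall z', d z z' < delta -> d (act s z) (act s z') < eps.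
Proof.
  intros [_ [_ Hc]] s z eps He. destruct (Hc s z eps He) as [U [delta [_ [Hs [Hd H]]]]].
  exists delta. split; auto.
Qed.

Lemma density {G X : Type} (op : G -> G -> G) e opn (d : X -> X -> R) act :
  is_metric d -> is_continuous_action op e opn d act -> minimal_action d act ->
  forall a b eps, 0 < eps -> exists t, d b (act t a) < eps.
Proof.
  intros Hm Hact Hmin a b.
  pose proof Hm as [Hpos [Hz [Hs Ht]]].
  pose proof Hact as [He [Hcomp _]].
  apply (Hmin (fun z => forall eps, 0 < eps -> exists t, d z (act t a) < eps)).
  - intros z Hnz.
    assert (H0 : exists e0, 0 < e0 /\ forall t, e0 <= d z (act t a)).
    { apply NNPP; intro H1. apply Hnz. intros eps Heps. apply NNPP; intro H2. apply H1.
      exists eps. split; auto. intro t. apply Rnot_lt_le. intro H3. apply H2. exists t; auto. }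
    destruct H0 as [e0 [He0 H0]]. exists (e0/2). split. lra.
    intros y Hy HA. destruct (HA (e0/2)) as [t Ht']. lra.
    specialize (H0 t). specialize (Ht z y (act t a)). lra.
  - intros s z HA eps Heps. destruct (act_cont _ _ _ _ _ Hact s z eps Heps) as [dl [Hdl H]].
    destruct (HA dl Hdl) as [t Htt]. exists (op s t). rewrite Hcomp. apply H; auto.
  - exists a. intros eps Heps. exists e. rewrite He. rewrite (proj2 (Hz a a) eq_refl). auto.
Qed.

Lemma prox_fiber {G X Y : Type} (op : G -> G -> G) e inv (d : X -> X -> R) act
  (dY : Y -> Y -> R) actY (pi : X -> Y) :
  compact_metric_space d -> is_metric dY -> metric_continuous d dY pi ->
  (forall t x, pi (act t x) = actY t (pi x)) -> equicontinuous dY actY ->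
  (forall y, actY e y = y) -> (forall g h y, actY (op g h) y = actY g (actY h y)) ->
  (forall a, op (inv a) a = e) ->
  forall a y, proximal d act a y -> pi y = pi a.
Proof.
  intros Hc HmY Hpic Hequiv Heq HYe HYc Hinv a y Hp.
  pose proof HmY as [HYpos [HYz [HYs HYt]]].
  pose proof (proj1 Hc) as [Hpos [Hz [Hs Ht]]].
  apply (eq_small dY HmY). intros eps Heps.
  destruct (Heq eps Heps) as [eta [Heta Hq]].
  assert (Hex : exists t, dY (pi (act t a)) (pi (act t y)) < eta).
  { assert (H : forall n, exists t, d (act t a) (act t y) < / INR (S n)).
    { intro n. apply Hp. apply Rinv_0_lt_compat, lt_0_INR. lia. }
    set (T := fun n => proj1_sig (constructive_indefinite_description _ (H n))).
    assert (HT : forall n, d (act (T n) a) (act (T n) y) < / INR (S n)).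
    { intro n. exact (proj2_sig (constructive_indefinite_description _ (H n))). }
    destruct (cluster d Hc (fun n => act (T n) a)) as [z Hzc].
    destruct (Hpic z (eta/2)) as [rho [Hrho Hr]]. lra.
    destruct (small_inv (rho/2)) as [K HK]. lra.
    destruct (Hzc (rho/2) ltac:(lra) K) as [n [Hn Hdn]].
    exists (T n). specialize (HK n Hn). specialize (HT n).
    assert (H1 : d z (act (T n) y) < rho).
    { specialize (Ht z (act (T n) a) (act (T n) y)). lra. }
    assert (H2 : d z (act (T n) a) < rho) by lra. pose proof (Hr _ H2). pose proof (Hr _ H1).
    specialize (HYt (pi (act (T n) a)) (pi z) (pi (act (T n) y))).
    rewrite (HYs (pi (act (T n) a)) (pi z)) in HYt. lra. }
  destruct Hex as [t Hdt]. rewrite !Hequiv in Hdt.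
  specialize (Hq _ _ Hdt (inv t)). rewrite <- !HYc, Hinv, !HYe in Hq.
  rewrite HYs. auto.
Qed.

Lemma NoDup_map_in {A B : Type} (f : A -> B) (l : list A) :
  NoDup l -> (forall a b, In a l -> In b l -> f a = f b -> a = b) -> NoDup (map f l).
Proof.
  induction l as [|h l IH]; intros Hnd Hinj; simpl. constructor.
  inversion Hnd; subst. constructor.
  - intro Hin. apply in_map_iff in Hin as [a [Ha Hal]].
    assert (a = h) by (apply Hinj; simpl; auto). subst; contradiction.
  - apply IH; auto. intros a b Ha Hb. apply Hinj; simpl; auto.
Qed.

Lemma transport {G X Y : Type} (op : G -> G -> G) e opn (d : X -> X -> R) act
  (dY : Y -> Y -> R) actY (pi : X -> Y) :
  compact_metric_space d -> is_continuous_action op e opn d act -> minimal_action d act ->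
  is_metric dY -> metric_continuous d dY pi -> (forall y, exists x, pi x = y) ->
  (forall t x, pi (act t x) = actY t (pi x)) ->
  forall x y delta l, 0 < delta -> sep_fiber_set d act pi x delta l ->
  exists l', sep_fiber_set d act pi y delta l' /\ length l' = length l.
Proof.
  intros Hc Hact Hmin HmY Hpic Hsurj Hequiv x y delta l Hdel [Hnd [Hfib Hsep]].
  pose proof HmY as [HYpos [HYz [HYs HYt]]].
  pose proof (proj1 Hc) as [Hpos [Hz [Hs Ht]]].
  pose proof Hact as [He [Hcomp _]].
  destruct (Hsurj x) as [a0 Ha0]. destruct (Hsurj y) as [b Hb].
  assert (H : forall n, exists t, d b (act t a0) < / INR (S n)).
  { intro n. apply (density op e opn d act (proj1 Hc) Hact Hmin).
    apply Rinv_0_lt_compat, lt_0_INR. lia. }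
  set (T := fun n => proj1_sig (constructive_indefinite_description _ (H n))).
  assert (HT : forall n, d b (act (T n) a0) < / INR (S n)).
  { intro n. exact (proj2_sig (constructive_indefinite_description _ (H n))). }
  destruct (multi d Hc (fun a n => act (T n) a) l) as [phi [Hphi Hl]].
  assert (Hf : forall a, exists z, In a l -> conv d (fun n => act (T (phi n)) a) z).
  { intro a. destruct (classic (In a l)) as [Hi|Hi].
    destruct (Hl a Hi) as [z Hz']. exists z; auto. exists a. intro; contradiction. }
  set (f := fun a => proj1_sig (constructive_indefinite_description _ (Hf a))).
  assert (Hfc : forall a, In a l -> conv d (fun n => act (T (phi n)) a) (f a)).
  { intro a. exact (proj2_sig (constructive_indefinite_description _ (Hf a))). }
  clearbody f T.
  assert (Hfy : forall a, In a l -> pi (f a) = y).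
  { intros a Ha. apply (eq_small dY HmY). intros eps Heps.
    destruct (Hpic (f a) (eps/2)) as [r1 [Hr1 H1]]. lra.
    destruct (Hpic b (eps/2)) as [r2 [Hr2 H2]]. lra.
    destruct (Hfc a Ha r1 Hr1) as [N1 HN1].
    destruct (small_inv r2 Hr2) as [K HK]. destruct (Hphi K) as [M HM].
    set (n := Nat.max N1 M).
    specialize (HN1 n ltac:(unfold n; lia)). specialize (HM n ltac:(unfold n; lia)).
    specialize (HK _ HM). specialize (HT (phi n)).
    assert (E : pi (act (T (phi n)) a) = pi (act (T (phi n)) a0)).
    { rewrite !Hequiv, Hfib, Ha0; auto. }
    pose proof (H1 _ HN1) as G1. assert (G2 : d b (act (T (phi n)) a0) < r2) by lra.
    pose proof (H2 _ G2) as G3. rewrite <- E in G3. rewrite Hb in G3.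
    specialize (HYt (pi (f a)) (pi (act (T (phi n)) a)) y).
    rewrite (HYs (pi (act (T (phi n)) a)) y) in HYt. lra. }
  assert (Hfs : forall a c, In a l -> In c l -> a <> c -> forall s, delta <= d (act s (f a)) (act s (f c))).
  { intros a c Ha Hc' Hac s. apply Rnot_lt_le. intro Hlt.
    set (D := d (act s (f a)) (act s (f c))) in *.
    set (ep := (delta - D)/3).
    destruct (act_cont _ _ _ _ _ Hact s (f a) ep ltac:(unfold ep; lra)) as [n1 [Hn1 K1]].
    destruct (act_cont _ _ _ _ _ Hact s (f c) ep ltac:(unfold ep; lra)) as [n2 [Hn2 K2]].
    destruct (Hfc a Ha n1 Hn1) as [N1 HN1]. destruct (Hfc c Hc' n2 Hn2) as [N2 HN2].
    set (n := Nat.max N1 N2).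
    specialize (HN1 n ltac:(unfold n; lia)). specialize (HN2 n ltac:(unfold n; lia)).
    specialize (K1 _ HN1). specialize (K2 _ HN2).
    rewrite <- Hcomp in K1, K2.
    specialize (Hsep a c Ha Hc' Hac (op s (T (phi n)))).
    pose proof (Ht (act (op s (T (phi n))) a) (act s (f a)) (act (op s (T (phi n))) c)).
    pose proof (Ht (act s (f a)) (act s (f c)) (act (op s (T (phi n))) c)).
    rewrite (Hs (act (op s (T (phi n))) a) (act s (f a))) in *.
    unfold ep, D in *. lra. }
  exists (map f l). split; [split; [|split]|].
  - apply NoDup_map_in; auto. intros a c Ha Hc' Hfac. apply NNPP. intro Hne.
    specialize (Hfs a c Ha Hc' Hne e). rewrite !He, Hfac in Hfs.
    rewrite (proj2 (Hz (f c) (f c)) eq_refl) in Hfs. lra.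
  - intros w Hw. apply in_map_iff in Hw as [a [<- Ha]]. auto.
  - intros w1 w2 Hw1 Hw2 Hne t.
    apply in_map_iff in Hw1 as [a [<- Ha]]. apply in_map_iff in Hw2 as [c [<- Hc']].
    apply Hfs; auto. intro; subst; auto.
  - apply length_map.
Qed.

Lemma sep_weaken {G X Y : Type} (d : X -> X -> R) (act : G -> X -> X) (pi : X -> Y) y dl dl' l :
  dl' <= dl -> sep_fiber_set d act pi y dl l -> sep_fiber_set d act pi y dl' l.
Proof.
  intros Hle [H1 [H2 H3]]. split; [|split]; auto. intros a b Ha Hb Hab t.
  specialize (H3 a b Ha Hb Hab t). lra.
Qed.

Theorem mainTheorem2
  (G : Type) (op : G -> G -> G) (e : G) (inv : G -> G) (opn : (G -> Prop) -> Prop)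
  (X : Type) (d : X -> X -> R) (act : G -> X -> X)
  (Xmax : Type) (dmax : Xmax -> Xmax -> R) (actmax : G -> Xmax -> Xmax)
  (pimax : X -> Xmax)
  (HG : is_LCA_group op e inv opn)
  (HX : compact_metric_space d)
  (Hact : is_continuous_action op e opn d act)
  (Hmin : minimal_action d act)
  (Hmef : is_max_equicontinuous_factor op e opn d act dmax actmax pimax)
  (Hmr : finite_min_rank pimax) :
  exists cr : nat,
    (* cr = lim_{delta->0+} cr(x, delta), for every x in Xmax *)
    (forall x0 : Xmax, cr_limit d act pimax x0 cr) /\
    (* cr = #pi^{-1}(x) for every fiber distal x *)
    (forall x : Xmax, fiber_distal d act pimax x -> fiber_card pimax x cr) /\
    (* X_max^distal = {x : #pi^{-1}(x) = cr} *)
    (forall x : Xmax, fiber_distal d act pimax x <-> fiber_card pimax x cr) /\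
    (* cr = mr whenever a fiber distal point exists *)
    ((exists x : Xmax, fiber_distal d act pimax x) -> min_rank pimax cr).
Proof.
  destruct Hmef as [Hfac [Heq _]].
  destruct Hfac as [Hcmax [Hactmax [Hpic [Hsurj Hequiv]]]].
  pose proof (proj1 Hcmax) as HmY.
  destruct Hactmax as [HYe [HYc _]].
  destruct HG as [[_ [_ [_ Hinv]]] _].
  pose proof (proj1 HX) as [Hpos [Hz [Hs Ht]]].
  destruct Hmr as [y0 [m0 [L0 [HL0nd [HL0len HL0iff]]]]].
  pose proof (transport op e opn d act dmax actmax pimax HX Hact Hmin HmY Hpic Hsurj Hequiv) as Htr.
  set (P := fun k => exists dl x l, 0 < dl /\ sep_fiber_set d act pimax x dl l /\ length l = k).
  destruct (bounded_max P m0) as [cr [HPcr Hcrmax]].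
  { exists 1, y0, nil. split. lra. split; auto. split. constructor. split. intros x [].
    intros a b []. }
  { intros k [dl [x [l [Hdl [Hsep Hlen]]]]].
    destruct (Htr x y0 dl l Hdl Hsep) as [l' [Hs' Hl']].
    rewrite <- Hlen, <- Hl', <- HL0len. apply NoDup_incl_length. apply Hs'.
    intros a Ha. apply HL0iff. apply Hs'. auto. }
  destruct HPcr as [dl0 [x1 [l1 [Hdl0 [Hsep1 Hlen1]]]]].
  assert (Hcr : forall x0 dl, 0 < dl -> dl < dl0 -> cr_at d act pimax x0 dl cr).
  { intros x0 dl H1 H2. split.
    - destruct (Htr x1 x0 dl l1 H1) as [l' [Hs' Hl']].
      apply (sep_weaken _ _ _ _ dl0); auto. lra.
      exists l'. split; auto. lia.
    - intros l Hl. apply Hcrmax. exists dl, x0, l. auto. }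
  assert (Hprox : forall a y, proximal d act a y -> pimax y = pimax a).
  { intros. apply (prox_fiber op e inv d act dmax actmax pimax); auto. }
  assert (H2 : forall x, fiber_distal d act pimax x -> fiber_card pimax x cr).
  { intros x Hfd. destruct (Hcr x (dl0/2)) as [[l0 [Hs0 Hl0]] _]; try lra.
    assert (Hin : forall a, pimax a = x -> In a l0).
    { intros a Ha. apply NNPP; intro Hna.
      assert (Hne : forall b, In b l0 -> exists ep, 0 < ep /\ forall t, ep <= d (act t a) (act t b)).
      { intros b Hb. assert (Hab : b <> a) by (intro; subst; contradiction).
        assert (Hnp : ~ proximal d act a b) by (intro Hp; apply Hab; apply (Hfd a Ha); auto).
        apply NNPP; intro Hno. apply Hnp. intros eps Heps. apply NNPP; intro Hnt. apply Hno.
        exists eps. split; auto. intro t. apply Rnot_lt_le. intro. apply Hnt. exists t; auto. }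
      destruct (list_min_pos (fun b ep => forall t, ep <= d (act t a) (act t b)) l0) as [ep1 [Hep1 Hmn]].
      { intros b ep ep' Hq Hle t. specialize (Hq t). lra. }
      { auto. }
      assert (HP : P (S cr)).
      { exists (Rmin (dl0/2) ep1), x, (a :: l0). split. apply Rmin_pos; lra.
        split; [|simpl; auto].
        destruct Hs0 as [Hnd0 [Hf0 Hsp0]].
        split; [constructor; auto|split].
        - intros w [<-|Hw]; auto.
        - pose proof (Rmin_l (dl0/2) ep1). pose proof (Rmin_r (dl0/2) ep1).
          intros u v [<-|Hu] [<-|Hv] Huv t.
          + contradiction.
          + specialize (Hmn v Hv t). lra.
          + specialize (Hmn u Hu t). rewrite Hs. lra.
          + specialize (Hsp0 u v Hu Hv Huv t). lra. }
      specialize (Hcrmax _ HP). lia. }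
    exists l0. split. apply Hs0. split. auto. intro a. split. apply Hin. apply Hs0. }
  exists cr. split; [|split; [|split]].
  - intro x0. exists dl0. split; [exact Hdl0|]. intros. apply Hcr; auto.
  - exact H2.
  - intro x. split. apply H2. intros [L [HLnd [HLlen HLiff]]].
    destruct (Hcr x (dl0/2)) as [[l0 [Hs0 Hl0]] _]; try lra.
    assert (Hincl : incl L l0).
    { apply NoDup_length_incl. apply Hs0. lia. intros a Ha. apply HLiff. apply Hs0. auto. }
    intros a Ha y Hp. apply NNPP. intro Hne.
    assert (Hy : pimax y = x) by (rewrite (Hprox a y Hp); auto).
    assert (Ia : In a l0) by (apply Hincl, HLiff; auto).
    assert (Iy : In y l0) by (apply Hincl, HLiff; auto).
    destruct (Hp (dl0/2)) as [t Htt]. lra.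
    destruct Hs0 as [_ [_ Hsp]]. specialize (Hsp a y Ia Iy (fun E => Hne (eq_sym E)) t). lra.
  - intros [x Hx]. split. exists x. apply H2; auto.
    intros y m [L [HLnd [HLlen HLiff]]].
    destruct (Hcr y (dl0/2)) as [[l0 [Hs0 Hl0]] _]; try lra.
    rewrite <- Hl0, <- HLlen. apply NoDup_incl_length. apply Hs0.
    intros a Ha. apply HLiff. apply Hs0. auto.
Qed.
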